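(* For $\sigma>0$ and $\mu\in\mathbb{R}$ with $|\mu|\ge r(\sigma)$, we have $q_\sigma(\mu)\ge\frac14\sigma\,\ell_{exp}(\mu)>0$.
   Context: $\ell_{exp}(t)=\exp(-|t|)$. For $\sigma\ge0$, $g_\sigma(\mu)=\mathbb{E}_{Z\sim\mathcal{N}(0,1)}[\ell_{exp}(\mu+\sigma Z)]$ and $q_\sigma(\mu)=\frac{\partial}{\partial\sigma}g_\sigma(\mu)$. The function $r(\sigma)=\sigma^2+\sigma\sqrt{2\log\frac{4\sqrt2}{\sqrt\pi\sigma}}$ for $0<\sigma\le\frac{4\sqrt2}{\sqrt\pi}$ and $r(\sigma)=2\sigma^2$ for $\sigma>\frac{4\sqrt2}{\sqrt\pi}$. *)

(* Defs.v *)
From Stdlib Require Import Reals.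
From Coquelicot Require Import Coquelicot.
Open Scope R_scope.

Definition ell_exp (t : R) : R := exp (- Rabs t).

Definition gauss_density (z : R) : R := exp (- z ^ 2 / 2) / sqrt (2 * PI).

Definition g (sigma mu : R) : R :=
  RInt_gen (fun z => ell_exp (mu + sigma * z) * gauss_density z)
           (Rbar_locally m_infty) (Rbar_locally p_infty).

Definition c0 : R := 4 * sqrt 2 / sqrt PI.

Definition r (sigma : R) : R :=
  if Rle_dec sigma c0
  then sigma ^ 2 + sigma * sqrt (2 * ln (c0 / sigma))
  else 2 * sigma ^ 2.

(* Main.v *)
Require Import Defs.
From Stdlib Require Import Reals Lra.
From Coquelicot Require Import Coquelicot.
Open Scope R_scope.

Lemma exRc (f : R -> R) a b : (forall z, Rmin a b <= z <= Rmax a b -> continuous f z) -> ex_RInt f a b.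
Proof. exact (ex_RInt_continuous (V := R_CompleteNormedModule) f a b). Qed.
Lemma exdc (f : R -> R) x : ex_derive f x -> continuous f x.
Proof. exact (ex_derive_continuous (K := R_AbsRing) (V := R_NormedModule) f x). Qed.

Lemma RIc (f : R -> R) a b : ex_RInt f a b -> is_RInt f a b (RInt f a b).
Proof. exact (RInt_correct (V := R_CompleteNormedModule) f a b). Qed.

Lemma RInt_scalR (f : R -> R) k a b : ex_RInt f a b -> RInt (fun x => k * f x) a b = k * RInt f a b.
Proof. intros H. exact (RInt_scal (V := R_CompleteNormedModule) f a b k H). Qed.

Lemma RIu (f : R -> R) a b l : is_RInt f a b l -> RInt f a b = l.
Proof. exact (is_RInt_unique (V := R_CompleteNormedModule) f a b l). Qed.

Lemma exp_mono x y : x <= y -> exp x <= exp y.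
Proof. intros [H|H]. apply Rlt_le, exp_increasing, H. subst; apply Rle_refl. Qed.

Ltac Req := match goal with |- ?a = ?b => change (@eq R a b) end.

Definition ga (y : R) : R := exp (- y ^ 2 / 2).
Definition Kg (t : R) : R := RInt ga 0 t.
Definition Sf (u x : R) : R := exp (- (u ^ 2 * (1 + x ^ 2)) / 2) / (1 + x ^ 2).
Definition Sg (t : R) : R := RInt (Sf t) 0 1.

Lemma ga_der x : is_derive ga x (- x * ga x).
Proof. unfold ga. auto_derive; auto.
  replace (- (x * (x * 1)) * / 2) with (- x ^ 2 / 2) by (unfold Rdiv; ring). field. Qed.

Lemma ga_cont x : continuous ga x.
Proof. apply exdc. eexists. apply ga_der. Qed.

Lemma ex_RInt_ga a b : ex_RInt ga a b.
Proof. apply exRc. intros; apply ga_cont. Qed.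

Lemma K_der t : is_derive Kg t (ga t).
Proof.
  apply is_derive_RInt with (a := 0).
  - apply filter_forall. intros b. apply RIc, ex_RInt_ga.
  - apply ga_cont.
Qed.

Lemma pos1 x : 0 < 1 + x ^ 2.
Proof. nra. Qed.

Lemma Sf_der u x : is_derive (fun z => Sf z x) u (- u * exp (- (u ^ 2 * (1 + x ^ 2)) / 2)).
Proof.
  unfold Sf. auto_derive. auto.
  assert (H := pos1 x). simpl in *. unfold Rdiv. field. lra.
Qed.

Lemma Sf_cont u x : continuous (Sf u) x.
Proof. apply exdc. unfold Sf. auto_derive.
  assert (H := pos1 x). lra. Qed.

Lemma cont2_df z t : continuity_2d_pt (fun u v : R => Derive (fun z : R => Sf z v) u) t z.
Proof.
    eapply continuity_2d_pt_ext.
    { intros u v. symmetry. apply is_derive_unique. apply Sf_der. }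
    apply continuity_2d_pt_mult.
    + apply continuity_2d_pt_opp, continuity_2d_pt_id1.
    + apply continuity_1d_2d_pt_comp.
      * apply derivable_continuous_pt, derivable_pt_exp.
      * apply continuity_2d_pt_mult.
        -- apply continuity_2d_pt_opp.
           apply continuity_2d_pt_mult.
           ++ apply continuity_2d_pt_ext with (f := fun u v => u * (u * 1)).
              intros; reflexivity.
              repeat apply continuity_2d_pt_mult; try apply continuity_2d_pt_id1; apply continuity_2d_pt_const.
           ++ apply continuity_2d_pt_plus. apply continuity_2d_pt_const.
              apply continuity_2d_pt_ext with (f := fun u v => v * (v * 1)).
              intros; reflexivity.
              repeat apply continuity_2d_pt_mult; try apply continuity_2d_pt_id2; apply continuity_2d_pt_const.
        -- apply continuity_2d_pt_const.
Qed.

Lemma S_der (t : R) : is_derive Sg t (- exp (- t ^ 2 / 2) * Kg t).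
Proof.
  assert (H : is_derive Sg t (RInt (fun x => Derive (fun u => Sf u x) t) 0 1)).
  { apply (is_derive_RInt_param Sf 0 1 t).
    - apply filter_forall. intros y z _. eexists. apply Sf_der.
    - intros z _. apply cont2_df.
    - apply filter_forall. intros y. apply exRc. intros; apply Sf_cont. }
  replace (- exp (- t ^ 2 / 2) * Kg t) with (RInt (fun x => Derive (fun u => Sf u x) t) 0 1).
  exact H.
  rewrite (RInt_ext _ (fun x => (- exp (- t ^ 2 / 2)) * (t * ga (t * x + 0)))).
  2:{ intros x _. match goal with |- ?a = ?b => change (@eq R a b) end. transitivity (- t * exp (- (t ^ 2 * (1 + x ^ 2)) / 2)). { apply is_derive_unique, Sf_der. } unfold ga.
      replace (exp (- (t ^ 2 * (1 + x ^ 2)) / 2)) with (exp (- t ^ 2 / 2) * exp (- (t * x + 0) ^ 2 / 2)).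
      ring. rewrite <- exp_plus. f_equal. field. }
  rewrite RInt_scalR.
  2:{ apply exRc. intros. apply exdc. unfold ga. auto_derive. auto. }
  unfold Kg. f_equal.
  assert (E := RInt_comp_lin (V := R_CompleteNormedModule) ga t 0 0 1 (ex_RInt_ga _ _)).
  replace (t * 0 + 0) with 0 in E by ring. replace (t * 1 + 0) with t in E by ring.
  rewrite <- E. apply RInt_ext. intros; reflexivity.
Qed.

Definition Fg (t : R) : R := Kg t ^ 2 + 2 * Sg t.

Lemma F_der (t : R) : is_derive Fg t 0.
Proof.
  unfold Fg.
  eapply is_derive_ext.
  { intros u. reflexivity. }
  assert (H := is_derive_plus _ _ t _ _ (is_derive_pow Kg 2 t _ (K_der t)) (is_derive_scal Sg t 2 _ (S_der t))).
  match type of H with is_derive _ _ ?v => replace 0 with v end.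
  exact H.
  unfold plus, scal, ga. simpl. unfold mult. simpl. ring.
Qed.

Lemma const_der (f : R -> R) a b : (forall t, is_derive f t 0) -> f b = f a.
Proof.
  intros H.
  assert (H1 : is_RInt (fun _ => 0) a b (minus (f b) (f a))).
  { apply (is_RInt_derive (V := R_CompleteNormedModule) f (fun _ => 0)).
    intros; apply H. intros; apply continuous_const. }
  assert (H2 := is_RInt_const (V := R_NormedModule) a b 0).
  apply RIu in H1. apply RIu in H2.
  rewrite H1 in H2. unfold minus, plus, opp, scal in H2. simpl in H2.
  unfold mult in H2. simpl in H2. lra.
Qed.

Lemma S0 : Sg 0 = PI / 4.
Proof.
  unfold Sg.
  rewrite (RInt_ext _ (fun x => / (1 + x²))).
  2:{ intros x _. unfold Sf. replace (- (0 ^ 2 * (1 + x ^ 2)) / 2) with 0 by (simpl; field). rewrite exp_0. unfold Rsqr. simpl. field. assert (H := pos1 x). simpl in H. lra. }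
  assert (H : is_RInt (fun x => / (1 + x²)) 0 1 (minus (atan 1) (atan 0))).
  { apply (is_RInt_derive (V := R_CompleteNormedModule) atan).
    intros; apply is_derive_atan.
    intros. apply exdc. auto_derive. unfold Rsqr. nra. }
  apply RIu in H. rewrite H. rewrite atan_1, atan_0.
  unfold minus, plus, opp. simpl. ring.
Qed.

Lemma F_val t : Fg t = PI / 2.
Proof.
  rewrite (const_der Fg 0 t F_der). unfold Fg, Kg. rewrite RInt_point.
  rewrite S0. simpl. unfold zero. simpl. field.
Qed.

Lemma S_bounds t : 0 <= Sg t <= exp (- t ^ 2 / 2).
Proof.
  unfold Sg. split.
  - apply RInt_ge_0. lra. apply exRc. intros; apply Sf_cont.
    intros x _. unfold Sf. apply Rlt_le. apply Rdiv_lt_0_compat. apply exp_pos. apply pos1.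
  - replace (exp (- t ^ 2 / 2)) with (RInt (fun _ => exp (- t ^ 2 / 2)) 0 1).
    + apply RInt_le. lra. apply exRc. intros; apply Sf_cont.
      apply exRc. intros; apply continuous_const.
      intros x _. unfold Sf. assert (P := pos1 x).
      apply (Rle_trans _ (exp (- (t ^ 2 * (1 + x ^ 2)) / 2))).
      * unfold Rdiv at 1. rewrite <- (Rmult_1_r (exp _)) at 2.
        apply Rmult_le_compat_l. apply Rlt_le, exp_pos.
        rewrite <- Rinv_1. apply Rinv_le_contravar. lra. nra.
      * apply exp_mono.
        assert (0 <= t ^ 2 * x ^ 2) by (apply Rmult_le_pos; apply pow2_ge_0 ).
        nra.
    + rewrite RInt_const. unfold scal. simpl. unfold mult. simpl. ring.
Qed.

Lemma lim_expm : filterlim (fun t => exp (- t ^ 2 / 2)) (Rbar_locally p_infty) (locally 0).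
Proof.
  change (filterlim (fun t => exp (- t ^ 2 / 2)) (Rbar_locally p_infty) (Rbar_locally (Finite 0))).
  apply (filterlim_le_le (F := Rbar_locally p_infty) (fun _ => 0) _ (fun t => exp (- t))).
  - exists 2. intros t Ht. split. apply Rlt_le, exp_pos. apply exp_mono. nra.
  - apply filterlim_const.
  - assert (H : is_lim (fun t => exp (- t)) p_infty 0).
    { apply (is_lim_comp exp Ropp p_infty 0 m_infty).
      apply is_lim_exp_m.
      apply (is_lim_opp (fun y => y) p_infty p_infty). apply is_lim_id.
      exists 0. intros; discriminate. }
    exact H.
Qed.

Lemma K_nonneg t : 0 <= t -> 0 <= Kg t.
Proof.
  intros Ht. apply RInt_ge_0. exact Ht. apply ex_RInt_ga.
  intros; apply Rlt_le, exp_pos.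
Qed.

Lemma lim_K : filterlim Kg (Rbar_locally p_infty) (locally (sqrt (PI / 2))).
Proof.
  apply (filterlim_ext_loc (fun t => sqrt (PI / 2 - 2 * Sg t))).
  - exists 0. intros t Ht.
    assert (E := F_val t). unfold Fg in E.
    replace (PI / 2 - 2 * Sg t) with (Kg t ^ 2) by lra.
    apply sqrt_pow2. apply K_nonneg. lra.
  - apply (filterlim_comp _ _ _ (fun t => PI / 2 - 2 * Sg t) sqrt _ (locally (PI / 2))).
    +       apply (filterlim_comp _ _ _ Sg (fun s => PI / 2 - 2 * s) _ (locally 0)).
      * change (filterlim Sg (Rbar_locally p_infty) (Rbar_locally (Finite 0))).
        apply (filterlim_le_le (F := Rbar_locally p_infty) (fun _ => 0) _ (fun t => exp (- t ^ 2 / 2))).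
        -- apply filter_forall. apply S_bounds.
        -- apply filterlim_const.
        -- apply lim_expm.
      * assert (C := exdc (fun s => PI / 2 - 2 * s) 0 ltac:(auto_derive; auto)).
        unfold continuous in C. replace (PI / 2 - 2 * 0) with (PI / 2) in C by ring. exact C.
    + apply continuous_sqrt.
Qed.

Definition Phi (x : R) : R := Kg x / sqrt (2 * PI).

Lemma sq2pi_pos : 0 < sqrt (2 * PI).
Proof. apply sqrt_lt_R0. assert (H := PI_RGT_0). lra. Qed.

Lemma isd_eq (f g : R -> R) (x l l' : R) : is_derive f x l -> (forall y, f y = g y) -> l = l' -> is_derive g x l'.
Proof. intros H E L. subst l'. eapply is_derive_ext; [exact E | exact H]. Qed.

Lemma Phi_der x : is_derive Phi x (gauss_density x).
Proof.
  unfold Phi, gauss_density.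
  eapply isd_eq. apply (is_derive_scal Kg x (/ sqrt (2 * PI)) _ (K_der x)).
  - intros y. unfold scal. simpl. unfold mult. simpl. unfold Rdiv. ring.
  - unfold scal, ga, Rdiv. simpl. unfold mult. simpl. ring.
Qed.

Lemma gd_pos x : 0 < gauss_density x.
Proof. unfold gauss_density. apply Rdiv_lt_0_compat. apply exp_pos. apply sq2pi_pos. Qed.

Lemma gd_cont x : continuous gauss_density x.
Proof. apply exdc. unfold gauss_density. auto_derive. auto. Qed.

Lemma Phi_cont x : continuous Phi x.
Proof. apply exdc. eexists. apply Phi_der. Qed.

Lemma Phi_lim_p : filterlim Phi (Rbar_locally p_infty) (locally (1 / 2)).
Proof.
  unfold Phi.
  replace (1 / 2) with (sqrt (PI / 2) / sqrt (2 * PI)).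
  - apply (filterlim_comp _ _ _ Kg (fun k => k / sqrt (2 * PI)) _ (locally (sqrt (PI / 2)))).
    apply lim_K.
    apply (exdc (fun k => k / sqrt (2 * PI))). auto_derive. auto.
  - assert (P := PI_RGT_0).
    rewrite <- sqrt_div_alt by lra.
    replace (PI / 2 / (2 * PI)) with (/ 2 * / 2) by (field; lra).
    rewrite sqrt_square. field. lra.
Qed.

Lemma K_odd x : Kg (- x) = - Kg x.
Proof.
  unfold Kg.
  assert (E := RInt_comp_lin (V := R_CompleteNormedModule) ga (-1) 0 0 x (ex_RInt_ga _ _)).
  replace (-1 * 0 + 0) with 0 in E by ring. replace (-1 * x + 0) with (- x) in E by ring.
  rewrite <- E.
  rewrite (RInt_ext _ (fun y => -1 * ga y)).
  2:{ intros y _. unfold scal. simpl. unfold mult. simpl. unfold ga.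
      replace ((-1 * y + 0) ^ 2) with (y ^ 2) by ring. ring. }
  rewrite RInt_scalR. ring. apply ex_RInt_ga.
Qed.

Lemma Phi_odd x : Phi (- x) = - Phi x.
Proof. unfold Phi. rewrite K_odd. unfold Rdiv. ring. Qed.

Lemma Phi_lim_m : filterlim Phi (Rbar_locally m_infty) (locally (- (1 / 2))).
Proof.
  apply (filterlim_ext (fun x => - Phi (- x))).
  { intros x. rewrite Phi_odd. ring. }
  apply (filterlim_comp _ _ _ (fun x => Phi (- x)) Ropp _ (locally (1 / 2))).
  - apply (filterlim_comp _ _ _ Ropp Phi _ (Rbar_locally p_infty)).
    apply (filterlim_Rbar_opp m_infty). apply Phi_lim_p.
  - apply (exdc Ropp). auto_derive. auto.
Qed.

Lemma Phi_mono x y : x <= y -> Phi x <= Phi y.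
Proof.
  intros H. unfold Phi. unfold Rdiv. apply Rmult_le_compat_r.
  apply Rlt_le, Rinv_0_lt_compat, sq2pi_pos.
  unfold Kg. rewrite <- (RInt_Chasles ga 0 x y) by apply ex_RInt_ga.
  unfold plus. simpl.
  assert (0 <= RInt ga x y). apply RInt_ge_0. auto. apply ex_RInt_ga.
  intros; apply Rlt_le, exp_pos. lra.
Qed.

Lemma Phi0 : Phi 0 = 0.
Proof. unfold Phi, Kg. rewrite RInt_point. unfold zero. simpl. unfold Rdiv. ring. Qed.

Lemma Phi_le x : Phi x <= 1 / 2.
Proof.
  assert (H := filterlim_le (F := Rbar_locally p_infty) (fun _ => Phi x) Phi (Finite (Phi x)) (Finite (1/2))).
  simpl in H. apply H.
  - exists x. intros y Hy. apply Phi_mono. lra.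
  - apply filterlim_const.
  - apply Phi_lim_p.
Qed.

Lemma Phi_ge x : - (1 / 2) <= Phi x.
Proof.
  assert (H := filterlim_le (F := Rbar_locally m_infty) Phi (fun _ => Phi x) (Finite (- (1/2))) (Finite (Phi x))).
  simpl in H. apply H.
  - exists x. intros y Hy. apply Phi_mono. lra.
  - apply Phi_lim_m.
  - apply filterlim_const.
Qed.

Lemma exp_comb a b c : a + b = c -> exp a * exp b = exp c.
Proof. intros H. rewrite <- exp_plus, H. reflexivity. Qed.

Lemma shift_der c x : is_derive (fun z => z + c) x 1.
Proof. auto_derive. auto. ring. Qed.

Lemma Pshift_der (A c x : R) : is_derive (fun z => A * Phi (z + c)) x (A * gauss_density (x + c)).
Proof.
  eapply isd_eq.
  apply (is_derive_scal (fun z => Phi (z + c)) x A).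
  apply (is_derive_comp Phi (fun z => z + c) x (gauss_density (x + c)) 1).
  apply Phi_der. apply shift_der.
  intros; reflexivity.
  unfold scal. simpl. unfold mult. simpl. ring.
Qed.

Lemma Pshift_cont_der (A c x : R) : continuous (Derive (fun z => A * Phi (z + c))) x.
Proof.
  apply (continuous_ext (fun y => A * gauss_density (y + c))).
  { intros y. symmetry. apply is_derive_unique. apply Pshift_der. }
  apply exdc. unfold gauss_density. auto_derive. auto.
Qed.

Lemma Pshift_lim_p (A c : R) :
  filterlim (fun z => A * Phi (z + c)) (Rbar_locally p_infty) (locally (A * (1 / 2))).
Proof.
  apply (filterlim_comp _ _ _ (fun z => Phi (z + c)) (fun p => A * p) _ (locally (1 / 2))).
  - apply (filterlim_comp _ _ _ (fun z => z + c) Phi _ (Rbar_locally p_infty)).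
    + apply (is_lim_plus (fun z => z) (fun _ => c) p_infty p_infty c p_infty).
      apply is_lim_id. apply is_lim_const. unfold is_Rbar_plus. simpl. reflexivity.
    + apply Phi_lim_p.
  - apply (exdc (fun p => A * p)). auto_derive. auto.
Qed.

Lemma Pshift_lim_m (A c : R) :
  filterlim (fun z => A * Phi (z + c)) (Rbar_locally m_infty) (locally (A * (- (1 / 2)))).
Proof.
  apply (filterlim_comp _ _ _ (fun z => Phi (z + c)) (fun p => A * p) _ (locally (- (1 / 2)))).
  - apply (filterlim_comp _ _ _ (fun z => z + c) Phi _ (Rbar_locally m_infty)).
    + apply (is_lim_plus (fun z => z) (fun _ => c) m_infty m_infty c m_infty).
      apply is_lim_id. apply is_lim_const. unfold is_Rbar_plus. simpl. reflexivity.
    + apply Phi_lim_m.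
  - apply (exdc (fun p => A * p)). auto_derive. auto.
Qed.

Lemma lim_at_point (f : R -> R) a : filterlim f (at_point a) (locally (f a)).
Proof.
  intros P HP. unfold filtermap, at_point. apply locally_singleton. exact HP.
Qed.

Definition Gc (s mu : R) : R :=
  exp (s ^ 2 / 2 - mu) * (1 / 2 - Phi (s - mu / s)) +
  exp (s ^ 2 / 2 + mu) * (Phi (- mu / s - s) + 1 / 2).

Lemma g_eq s mu : 0 < s -> g s mu = Gc s mu.
Proof.
  intros Hs. unfold g.
  set (z0 := - mu / s).
  set (A := exp (s ^ 2 / 2 - mu)). set (B := exp (s ^ 2 / 2 + mu)).
  assert (HR : is_RInt_gen (fun z => ell_exp (mu + s * z) * gauss_density z)
                 (at_point z0) (Rbar_locally p_infty) (A * (1 / 2) - A * Phi (z0 + s))).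
  { apply (is_RInt_gen_ext (Derive (fun z => A * Phi (z + s)))).
    - apply (Filter_prod _ _ _ (fun a => a = z0) (fun b => z0 < b)).
      + reflexivity.
      + exists z0. auto.
      + intros a b Ha Hb x Hx. simpl in Ha, Hb, Hx. subst a.
        rewrite Rmin_left in Hx by lra. rewrite Rmax_right in Hx by lra.
        transitivity (A * gauss_density (x + s)). { apply is_derive_unique, Pshift_der. }
        unfold ell_exp, gauss_density, A, Rdiv.
        assert (P : 0 < mu + s * x).
        { unfold z0 in Hx. destruct Hx as [Hx _]. apply (Rmult_lt_compat_l s) in Hx; [|lra].
          replace (s * (- mu / s)) with (- mu) in Hx by (field; lra). lra. }
        rewrite Rabs_right by lra.
        rewrite <- !Rmult_assoc. f_equal. rewrite <- !exp_plus. f_equal. Req. field.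
    - apply (is_RInt_gen_Derive (fun z => A * Phi (z + s)) (A * Phi (z0 + s)) (A * (1 / 2))).
      + apply filter_forall. intros _ x _. eexists. apply Pshift_der.
      + apply filter_forall. intros _ x _. apply Pshift_cont_der.
      + apply (lim_at_point (fun z => A * Phi (z + s))).
      + apply Pshift_lim_p. }
  assert (HL : is_RInt_gen (fun z => ell_exp (mu + s * z) * gauss_density z)
                 (Rbar_locally m_infty) (at_point z0) (B * Phi (z0 + - s) - B * (- (1 / 2)))).
  { apply (is_RInt_gen_ext (Derive (fun z => B * Phi (z + - s)))).
    - apply (Filter_prod _ _ _ (fun a => a < z0) (fun b => b = z0)).
      + exists z0. auto.
      + reflexivity.
      + intros a b Ha Hb x Hx. simpl in Ha, Hb, Hx. subst b.
        rewrite Rmin_left in Hx by lra. rewrite Rmax_right in Hx by lra.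
        transitivity (B * gauss_density (x + (- s))). { apply is_derive_unique, Pshift_der. }
        unfold ell_exp, gauss_density, B, Rdiv.
        assert (P : mu + s * x < 0).
        { unfold z0 in Hx. destruct Hx as [_ Hx]. apply (Rmult_lt_compat_l s) in Hx; [|lra].
          replace (s * (- mu / s)) with (- mu) in Hx by (field; lra). lra. }
        rewrite Rabs_left by lra.
        rewrite <- !Rmult_assoc. f_equal. rewrite <- !exp_plus. f_equal. Req. field.
    - apply (is_RInt_gen_Derive (fun z => B * Phi (z + - s)) (B * (- (1 / 2))) (B * Phi (z0 + - s))).
      + apply filter_forall. intros _ x _. eexists. apply Pshift_der.
      + apply filter_forall. intros _ x _. apply Pshift_cont_der.
      + apply Pshift_lim_m.
      + apply (lim_at_point (fun z => B * Phi (z + - s))). }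
  assert (H := is_RInt_gen_Chasles _ _ _ _ HL HR).
  rewrite (is_RInt_gen_unique _ _ H).
  unfold plus. simpl. unfold Gc, z0.
  subst z0 A B. assert (E1 : - mu / s + s = s - mu / s) by (field; lra).
  assert (E2 : - mu / s + - s = - mu / s - s) by (field; lra).
  rewrite E1, E2. Req. ring.
Qed.

Lemma exp_div x y : exp x / exp y = exp (x - y).
Proof. unfold Rminus, Rdiv. rewrite exp_plus, exp_Ropp. reflexivity. Qed.

Lemma DPhi y : Derive (fun x => Phi x) y = gauss_density y.
Proof. apply is_derive_unique, Phi_der. Qed.

Lemma Gc_der s mu : 0 < s ->
  is_derive (fun t => Gc t mu) s (s * Gc s mu - 2 * exp (- mu ^ 2 / (2 * s ^ 2)) / sqrt (2 * PI)).
Proof.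
  intros Hs. unfold Gc. auto_derive.
  { repeat split; try lra; eexists; apply Phi_der. }
  set (E1 := exp (s ^ 2 / 2 - mu)). set (E2 := exp (s ^ 2 / 2 + mu)).
  set (T := exp (- mu ^ 2 / (2 * s ^ 2))).
  replace (exp (s * (s * 1) * / 2 + - mu)) with E1 by (unfold E1; f_equal; field).
  replace (exp (s * (s * 1) * / 2 + mu)) with E2 by (unfold E2; f_equal; field).
  replace (s + - (mu * / s)) with (s - mu / s) by (field; lra).
  replace (- mu * / s + - s) with (- mu / s - s) by (field; lra).
  rewrite !DPhi.
  assert (G1 : gauss_density (s - mu / s) = T / E1 / sqrt (2 * PI)).
  { unfold gauss_density, T, E1. f_equal. rewrite exp_div. f_equal. field. lra. }
  assert (G2 : gauss_density (- mu / s - s) = T / E2 / sqrt (2 * PI)).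
  { unfold gauss_density, T, E2. f_equal. rewrite exp_div. f_equal. field. lra. }
  rewrite G1, G2.
  assert (P1 : 0 < E1) by apply exp_pos.
  assert (P2 : 0 < E2) by apply exp_pos.
  assert (P3 := sq2pi_pos).
  clearbody E1 E2 T.
  field. lra.
Qed.

Lemma c0_pos : 0 < c0.
Proof.
  unfold c0. apply Rdiv_lt_0_compat.
  assert (0 < sqrt 2) by (apply sqrt_lt_R0; lra). lra.
  apply sqrt_lt_R0, PI_RGT_0.
Qed.

Lemma r_ge s : 0 < s -> s ^ 2 <= r s.
Proof.
  intros Hs. unfold r. destruct (Rle_dec s c0).
  - assert (0 <= s * sqrt (2 * ln (c0 / s))) by (apply Rmult_le_pos; [lra | apply sqrt_pos]). lra.
  - assert (0 <= s ^ 2) by apply pow2_ge_0. lra.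
Qed.

Lemma expX_bound s m : 0 < s -> r s <= m ->
  exp (- (m - s ^ 2) ^ 2 / (2 * s ^ 2)) <= s / c0.
Proof.
  intros Hs Hm. assert (Hc := c0_pos).
  assert (Hs2 : 0 < s ^ 2) by (apply pow_lt; lra).
  unfold r in Hm. destruct (Rle_dec s c0) as [Hle|Hgt].
  - set (L := ln (c0 / s)) in *.
    assert (HL : 0 <= L).
    { unfold L. destruct (Req_dec (c0 / s) 1) as [E|E].
      rewrite E, ln_1. lra.
      apply Rlt_le. rewrite <- ln_1. apply ln_increasing. lra.
      assert (1 <= c0 / s). { apply (Rmult_le_reg_r s). lra. unfold Rdiv. rewrite Rmult_assoc, Rinv_l by lra. lra. }
      lra. }
    set (q := sqrt (2 * L)) in Hm.
    assert (Hq : q * q = 2 * L) by (apply sqrt_sqrt; lra).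
    assert (Hq0 : 0 <= q) by apply sqrt_pos.
    assert (H1 : 2 * s ^ 2 * L <= (m - s ^ 2) ^ 2).
    { assert (0 <= s * q) by (apply Rmult_le_pos; lra).
      assert (s * q <= m - s ^ 2) by lra.
      replace (2 * s ^ 2 * L) with ((s * q) * (s * q)) by (replace (s * q * (s * q)) with (s ^ 2 * (q * q)) by ring; rewrite Hq; ring).
      simpl. nra. }
    apply (Rle_trans _ (exp (- L))).
    + apply exp_mono. apply (Rmult_le_reg_r (2 * s ^ 2)). lra.
      replace (- (m - s ^ 2) ^ 2 / (2 * s ^ 2) * (2 * s ^ 2)) with (- (m - s ^ 2) ^ 2) by (field; lra).
      lra.
    + rewrite exp_Ropp. unfold L. rewrite exp_ln.
      right. field. split; lra.
      apply Rdiv_lt_0_compat; lra.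
  - apply (Rle_trans _ 1).
    + rewrite <- exp_0. apply exp_mono.
      assert (0 <= (m - s ^ 2) ^ 2) by apply pow2_ge_0.
      assert (0 <= (m - s ^ 2) ^ 2 / (2 * s ^ 2)) by (apply Rdiv_le_0_compat; lra).
      lra.
    + apply (Rmult_le_reg_r c0). lra. unfold Rdiv. rewrite Rmult_assoc, Rinv_l by lra. lra.
Qed.

Lemma const_id s : 0 < s -> 2 / sqrt (2 * PI) * (s / c0) = s / 4.
Proof.
  intros Hs. unfold c0.
  assert (P := PI_RGT_0).
  rewrite sqrt_mult by lra.
  assert (A2 : 0 < sqrt 2) by (apply sqrt_lt_R0; lra).
  assert (AP : 0 < sqrt PI) by (apply sqrt_lt_R0; lra).
  assert (Q := sqrt_sqrt 2 ltac:(lra)).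
  field_simplify. 2:{ split; lra. }
  replace (sqrt 2 ^ 2) with 2 by (simpl; lra). field.
Qed.

Lemma Gc_lower s mu : 0 < s -> s ^ 2 <= Rabs mu -> exp (s ^ 2 / 2 - Rabs mu) / 2 <= Gc s mu.
Proof.
  intros Hs Hm. unfold Gc.
  assert (E1 := exp_pos (s ^ 2 / 2 - mu)). assert (E2 := exp_pos (s ^ 2 / 2 + mu)).
  destruct (Rle_dec 0 mu) as [Hp|Hn].
  - rewrite Rabs_right in * by lra.
    assert (Phi (s - mu / s) <= 0).
    { rewrite <- Phi0. apply Phi_mono.
      assert (s <= mu / s). { apply (Rmult_le_reg_r s). lra. unfold Rdiv. rewrite Rmult_assoc, Rinv_l by lra. simpl in Hm. lra. }
      lra. }
    assert (G := Phi_ge (- mu / s - s)).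
    assert (0 <= exp (s ^ 2 / 2 + mu) * (Phi (- mu / s - s) + 1 / 2)) by (apply Rmult_le_pos; lra).
    assert (exp (s ^ 2 / 2 - mu) / 2 <= exp (s ^ 2 / 2 - mu) * (1 / 2 - Phi (s - mu / s))).
    { unfold Rdiv. apply Rmult_le_compat_l; lra. }
    lra.
  - rewrite Rabs_left in * by lra.
    replace (s ^ 2 / 2 - - mu) with (s ^ 2 / 2 + mu) by ring.
    assert (0 <= Phi (- mu / s - s)).
    { rewrite <- Phi0. apply Phi_mono.
      assert (s <= - mu / s). { apply (Rmult_le_reg_r s). lra. unfold Rdiv. rewrite Rmult_assoc, Rinv_l by lra. simpl in Hm. lra. }
      lra. }
    assert (G := Phi_le (s - mu / s)).
    assert (0 <= exp (s ^ 2 / 2 - mu) * (1 / 2 - Phi (s - mu / s))) by (apply Rmult_le_pos; lra).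
    assert (exp (s ^ 2 / 2 + mu) / 2 <= exp (s ^ 2 / 2 + mu) * (Phi (- mu / s - s) + 1 / 2)).
    { unfold Rdiv. apply Rmult_le_compat_l; lra. }
    lra.
Qed.

Theorem lemma5 (sigma mu : R) (Hs : 0 < sigma) (Hmu : r sigma <= Rabs mu) :
  ex_derive (fun s => g s mu) sigma /\
  Derive (fun s => g s mu) sigma >= / 4 * sigma * ell_exp mu /\
  / 4 * sigma * ell_exp mu > 0.
Proof.
  assert (Hloc : locally sigma (fun t => Gc t mu = g t mu)).
  { exists (mkposreal sigma Hs). intros y Hy.
    unfold ball in Hy. simpl in Hy. unfold AbsRing_ball, abs, minus, plus, opp in Hy. simpl in Hy.
    apply Rabs_def2 in Hy. symmetry. apply g_eq. lra. }
  assert (HD := is_derive_ext_loc _ _ _ _ Hloc (Gc_der sigma mu Hs)).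
  assert (Hpos : / 4 * sigma * ell_exp mu > 0).
  { unfold ell_exp. assert (H := exp_pos (- Rabs mu)).
    apply Rmult_gt_0_compat; [apply Rmult_gt_0_compat; lra | lra]. }
  split; [eexists; exact HD|]. split; [|exact Hpos].
  assert (DV : Derive (fun s => g s mu) sigma = sigma * Gc sigma mu - 2 * exp (- mu ^ 2 / (2 * sigma ^ 2)) / sqrt (2 * PI)) by (apply is_derive_unique; exact HD).
  rewrite DV.
  assert (Hr := r_ge sigma Hs).
  assert (GL := Gc_lower sigma mu Hs ltac:(lra)).
  assert (Hm2 : mu ^ 2 = Rabs mu ^ 2) by (rewrite <- (pow2_abs mu); reflexivity).
  set (m := Rabs mu) in *.
  assert (Hs2 : 0 < sigma ^ 2) by (apply pow_lt; lra).
  set (E := exp (sigma ^ 2 / 2 - m)) in *.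
  assert (TE : exp (- mu ^ 2 / (2 * sigma ^ 2)) = E * exp (- (m - sigma ^ 2) ^ 2 / (2 * sigma ^ 2))).
  { unfold E. rewrite <- exp_plus. f_equal. rewrite Hm2. field. lra. }
  assert (XB := expX_bound sigma m Hs Hmu).
  assert (CI := const_id sigma Hs).
  assert (P3 := sq2pi_pos).
  assert (EP : 0 < E) by apply exp_pos.
  assert (T1 : 2 * exp (- mu ^ 2 / (2 * sigma ^ 2)) / sqrt (2 * PI) <= E * (sigma / 4)).
  { rewrite TE. rewrite <- CI.
    replace (2 * (E * exp (- (m - sigma ^ 2) ^ 2 / (2 * sigma ^ 2))) / sqrt (2 * PI))
      with (E * (2 / sqrt (2 * PI) * exp (- (m - sigma ^ 2) ^ 2 / (2 * sigma ^ 2)))) by (field; lra).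
    apply Rmult_le_compat_l. lra. apply Rmult_le_compat_l.
    apply Rlt_le, Rdiv_lt_0_compat; lra. exact XB. }
  assert (T2 : exp (- m) <= E).
  { unfold E. apply exp_mono. lra. }
  unfold ell_exp.
  assert (sigma * (E / 2) <= sigma * Gc sigma mu) by (apply Rmult_le_compat_l; lra).
  assert (sigma * exp (- m) <= sigma * E) by (apply Rmult_le_compat_l; lra).
  apply Rle_ge. fold m. lra.
Qed.
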